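(* Let $n\equiv 2\pmod 4$ with $n\geqslant 6$. Then $\{x_1h_{n-1},\ x_2h_n,\ x_3,\ldots,x_n\}$ is a generating set of $\mathcal{AM}_n$ of minimum size. In particular, $\mathcal{AM}_n$ has rank $n$.
   Context: Let $\Omega_n=\{1<2<\cdots<n\}$ and $\mathcal{I}_n$ the monoid of all partial injective maps of $\Omega_n$, written on the right and composed left to right. $\mathcal{AI}_n$ is the set of all $\alpha\in\mathcal{I}_n$ with $\alpha=\sigma|_{\mathrm{Dom}(\alpha)}$ for some even permutation $\sigma$; $\mathcal{PMI}_n$ is the set of monotone (order-preserving or order-reversing) elements and $\mathcal{AM}_n=\mathcal{AI}_n\cap\mathcal{PMI}_n$. The rank of a monoid is the minimum size of a generating set. Let $X_i=\Omega_n\setminus\{i\}$. Define $x_1,\dots,x_n$ as the (unique) order-preserving partial permutations with: $x_1$: domain $X_1$, image $X_n$ if $n$ is odd and $X_{n-1}$ if $n$ is even; $x_2$: domain $X_2$, image $X_{n-1}$ if $n$ is odd and $X_n$ if $n$ is even; $x_i$ ($3\leqslant i\leqslant n$): domain $X_i$, image $X_{i-2}$. For $1\leqslant i\leqslant n$, $h_i$ is the unique order-reversing partial permutation with domain and image $X_i$ (the reverse of the partial identity on $X_i$). *)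

(* Defs.v *)
From mathcomp Require Import all_boot all_fingroup.
Set Implicit Arguments. Unset Strict Implicit. Unset Printing Implicit Defensive.

(* Omega_n = {1 < ... < n} is modelled by 'I_n, the element x : 'I_n standing
   for the label x.+1.  A partial map of Omega_n is a finite function
   'I_n -> option 'I_n (None = undefined). *)
Definition partmap (n : nat) := {ffun 'I_n -> option 'I_n}.

Definition pinj n (a : partmap n) : bool :=
  [forall x : 'I_n, forall y : 'I_n, (a x != None) && (a x == a y) ==> (x == y)].

(* composition written on the right, left to right: x (a b) = (x a) b *)
Definition pmul n (a b : partmap n) : partmap n :=
  [ffun x => if a x is Some y then b y else None].

Definition pid n : partmap n := [ffun x => Some x].

Definition alt_restr n (a : partmap n) : bool :=
  [exists s : {perm 'I_n}, ~~ odd_perm s &&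
     [forall x, (a x != None) ==> (a x == Some (s x))]].

Definition order_pres n (a : partmap n) : bool :=
  [forall x : 'I_n, forall y : 'I_n, (x < y)%N ==>
     (match a x, a y with Some u, Some v => (u < v)%N | _, _ => true end)].

Definition order_rev n (a : partmap n) : bool :=
  [forall x : 'I_n, forall y : 'I_n, (x < y)%N ==>
     (match a x, a y with Some u, Some v => (v < u)%N | _, _ => true end)].

Definition In_ n : {set partmap n} := [set a | pinj a].
Definition PMI n : {set partmap n} := [set a in In_ n | order_pres a || order_rev a].
Definition AI n : {set partmap n} := [set a in In_ n | alt_restr a].
Definition AM n : {set partmap n} := AI n :&: PMI n.

Definition generates n (M S : {set partmap n}) : Prop :=
  forall f : partmap n, f \in M <->
    exists s : seq (partmap n), all (fun g => g \in S) s /\ f = foldl (@pmul n) (@pid n) s.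

Definition is_rank n (M : {set partmap n}) (r : nat) : Prop :=
  (exists S : {set partmap n}, generates M S /\ #|S| = r) /\
  (forall S : {set partmap n}, generates M S -> r <= #|S|).

(* Build a partial map of 'I_n from a partial map on 1-based labels. *)
Definition of_labels n (f : nat -> option nat) : partmap n :=
  [ffun x : 'I_n => obind (fun k => insub k.-1) (f x.+1)].

(* rank of label k in X_i = Omega_n \ {i} (k <> i), and the label of
   rank r in X_j *)
Definition rank_in (i k : nat) : nat := if k < i then k else k.-1.
Definition elt_of_rank (j r : nat) : nat := if r < j then r else r.+1.

(* the unique order-preserving partial permutation with domain X_i and image X_j *)
Definition op_map n (i j : nat) : partmap n :=
  of_labels n (fun k => if k == i then None
                        else Some (elt_of_rank j (rank_in i k))).

(* h_i: the unique order-reversing partial permutation with domain and image X_i *)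
Definition h n (i : nat) : partmap n :=
  of_labels n (fun k => if k == i then None
                        else Some (elt_of_rank i (n - rank_in i k))).

Definition x n (i : nat) : partmap n :=
  if i == 1 then op_map n 1 (if odd n then n else n.-1)
  else if i == 2 then op_map n 2 (if odd n then n.-1 else n)
  else op_map n i (i - 2).

Definition gen_set n : {set partmap n} :=
  [set pmul (x n 1) (h n n.-1); pmul (x n 2) (h n n)]
  :|: [set:: [seq x n i | i <- iota 3 (n - 2)]].

(* Main.v *)
Require Import Defs.
From mathcomp Require Import all_boot all_fingroup.
From mathcomp Require Import zify.
Set Implicit Arguments. Unset Strict Implicit. Unset Printing Implicit Defensive.

Section Basics.
Variable n : nat.
Implicit Types (a b e : partmap n) (x y z u v w : 'I_n) (D : {set 'I_n}).

Lemma pmulE a b x : pmul a b x = if a x is Some y then b y else None.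
Proof. by rewrite ffunE. Qed.

Lemma pmulA a b e : pmul (pmul a b) e = pmul a (pmul b e).
Proof. apply/ffunP=> x; rewrite !pmulE; case: (a x) => // y; by rewrite pmulE. Qed.

Lemma pid1m a : pmul (@pid n) a = a.
Proof. by apply/ffunP=> x; rewrite pmulE ffunE. Qed.

Lemma pidm1 a : pmul a (@pid n) = a.
Proof. by apply/ffunP=> x; rewrite pmulE; case: (a x) => // y; rewrite ffunE. Qed.

Lemma foldl_pmul a s : foldl (@pmul n) a s = pmul a (foldl (@pmul n) (@pid n) s).
Proof.
elim: s a => [|g s IH] a /=; first by rewrite pidm1.
by rewrite IH [in RHS]IH pid1m pmulA.
Qed.

Definition dom a : {set 'I_n} := [set x | a x != None].
Definition img a : {set 'I_n} := [set y | [exists x, a x == Some y]].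
Definition tot a x : 'I_n := odflt x (a x).
Definition cmp (c : bool) (u v : 'I_n) : bool := if c then (v < u)%N else (u < v)%N.
Definition mono (c : bool) a : Prop :=
  forall x y u v, a x = Some u -> a y = Some v -> (x < y)%N -> cmp c u v.
Definition injd a : Prop := forall x y u, a x = Some u -> a y = Some u -> x = y.

Lemma in_dom a x : (x \in dom a) = (a x != None).
Proof. by rewrite inE. Qed.

Lemma in_img a y : reflect (exists x, a x = Some y) (y \in img a).
Proof.
rewrite inE; apply: (iffP existsP) => [[x /eqP]|[x e]]; exists x => //.
by rewrite e.
Qed.

Lemma dom_some a x : x \in dom a -> a x = Some (tot a x).
Proof. by rewrite in_dom /tot; case: (a x). Qed.

Lemma some_dom a x u : a x = Some u -> x \in dom a.
Proof. by rewrite in_dom => ->. Qed.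

Lemma some_img a x u : a x = Some u -> u \in img a.
Proof. by move=> e; apply/in_img; exists x. Qed.

Lemma some_tot a x u : a x = Some u -> tot a x = u.
Proof. by rewrite /tot => ->. Qed.

Lemma cmp_irr c u : ~~ cmp c u u.
Proof. by case: c; rewrite /cmp ltnn. Qed.
Lemma cmp_asym c u v : cmp c u v -> ~~ cmp c v u.
Proof. case: c; rewrite /cmp /= => *; lia. Qed.
Lemma cmp_trans c u v w : cmp c u v -> cmp c v w -> cmp c u w.
Proof. case: c; rewrite /cmp /= => *; lia. Qed.
Lemma cmp_total c u v : u != v -> cmp c u v || cmp c v u.
Proof.
move=> ne; have : val u != val v by [].
case: c; rewrite /cmp /= => *; lia.
Qed.
Lemma cmp_flip c u v : cmp c v u = cmp (~~ c) u v.
Proof. by case: c. Qed.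

Lemma mono_inj c a : mono c a -> injd a.
Proof.
move=> m x y u ex ey; case: (ltngtP x y) => h.
- by have := m _ _ _ _ ex ey h; rewrite (negbTE (cmp_irr _ _)).
- by have := m _ _ _ _ ey ex h; rewrite (negbTE (cmp_irr _ _)).
- exact: val_inj.
Qed.

Lemma tot_inj a : injd a -> {in dom a &, injective (tot a)}.
Proof.
move=> ia x y /dom_some ex /dom_some ey e.
by apply: (ia _ _ (tot a x)) => //; rewrite e.
Qed.

Lemma img_tot a : img a = tot a @: dom a.
Proof.
apply/setP=> y; apply/in_img/imsetP => [[x e]|[x /dom_some e ->]].
- by exists x; [apply: some_dom e | rewrite (some_tot e)].
- by exists x.
Qed.

Lemma tot_img a x : x \in dom a -> tot a x \in img a.
Proof. by move=> h; rewrite img_tot imset_f. Qed.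

Lemma domM a b : dom (pmul a b) = [set x | if a x is Some y then y \in dom b else false].
Proof. by apply/setP=> x; rewrite !inE pmulE; case: (a x) => // y; rewrite inE. Qed.

Lemma dom_pre a b D : injd b -> D \subset dom b -> dom a = tot b @: D ->
  dom (pmul b a) = D.
Proof.
move=> ib sD da; apply/setP=> x; rewrite domM inE.
case E: (b x) => [y|].
- have xd : x \in dom b by apply: some_dom E.
  rewrite da -(some_tot E); apply/imsetP/idP => [[z zD e]|xD]; last by exists x.
  by rewrite (tot_inj ib xd (subsetP sD _ zD) e).
- by apply/esym/negbTE; apply: contraT => /negbNE /(subsetP sD); rewrite in_dom E.
Qed.

Lemma img_pre a b : dom a \subset img b -> img (pmul b a) = img a.
Proof.
move=> s; apply/setP=> y; apply/in_img/in_img => [[x]|[x e]].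
- by rewrite pmulE; case: (b x) => // z e; exists z.
- have /(subsetP s) /in_img [z ez] := some_dom e.
  by exists z; rewrite pmulE ez.
Qed.

Lemma dom_post a b : img a \subset dom b -> dom (pmul a b) = dom a.
Proof.
move=> s; apply/setP=> x; rewrite domM !inE.
case E: (a x) => [y|] //=.
by have := subsetP s _ (some_img E); rewrite inE => ->.
Qed.

Lemma img_post a b : img a \subset dom b -> img (pmul a b) = tot b @: img a.
Proof.
move=> s; apply/setP=> z; apply/in_img/imsetP => [[x]|[y yi ->]].
- rewrite pmulE; case E: (a x) => [y|] // e.
  by exists y; [apply: some_img E | rewrite (some_tot e)].
- case/in_img: (yi) => x e; exists x; rewrite pmulE e.
  by apply: dom_some; apply: (subsetP s).
Qed.

Lemma img_exact a b : img a = dom b -> img (pmul a b) = img b.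
Proof. by move=> e; rewrite img_post e ?subxx // img_tot. Qed.

Lemma dom_exact a b : img a = dom b -> dom (pmul a b) = dom a.
Proof. by move=> e; rewrite dom_post // e. Qed.

Lemma monoM c d a b : mono c a -> mono d b -> mono (c (+) d) (pmul a b).
Proof.
move=> ma mb x y u v; rewrite !pmulE.
case Ex: (a x) => [p|] //; case Ey: (a y) => [q|] // ep eq xy.
move: (ma _ _ _ _ Ex Ey xy); case: c {ma} => /=; rewrite /cmp => h.
- by have := mb _ _ _ _ eq ep h; rewrite cmp_flip.
- exact: (mb _ _ _ _ ep eq h).
Qed.

Lemma injM a b : injd a -> injd b -> injd (pmul a b).
Proof.
move=> ia ib x y u; rewrite !pmulE.
case Ex: (a x) => [p|] //; case Ey: (a y) => [q|] // ep eq.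
have pq := ib _ _ _ ep eq; subst q; exact: ia _ _ _ Ex Ey.
Qed.

Lemma rank_eq c a x u : mono c a -> a x = Some u ->
  #|[set z in img a | cmp c z u]| = #|[set w in dom a | (w < x)%N]|.
Proof.
move=> m e; have ia := mono_inj m.
have -> : [set z in img a | cmp c z u] = tot a @: [set w in dom a | (w < x)%N].
  apply/setP=> z; rewrite inE; apply/andP/imsetP => [[/in_img [w ew] hz]|[w]].
  - exists w; last by rewrite (some_tot ew).
    rewrite inE (some_dom ew) /=; case: (ltngtP w x) => // h.
    + by have := m _ _ _ _ e ew h; move/cmp_asym; rewrite hz.
    + have wx : w = x by apply: val_inj.
      by subst w; move: hz; rewrite e in ew; case: ew => ->; rewrite (negbTE (cmp_irr _ _)).
  - rewrite inE => /andP [wd wx] ->; split; first exact: tot_img.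
    exact: m _ _ _ _ (dom_some wd) e wx.
apply: card_in_imset => p q; rewrite !inE => /andP [pd _] /andP [qd _].
by apply: (tot_inj ia); rewrite in_dom.
Qed.

Lemma mono_uniq c a b : mono c a -> mono c b -> dom a = dom b -> img a = img b -> a = b.
Proof.
move=> ma mb ed ei; apply/ffunP=> x.
case Ea: (a x) => [u|]; last first.
  by apply/esym/eqP; rewrite -[_ == _]negbK -in_dom -ed in_dom Ea.
have : x \in dom b by rewrite -ed (some_dom Ea).
move/dom_some; set v := tot b x => Eb; rewrite Eb.
case: (eqVneq u v) => [->//|neq]; exfalso.
have ru := rank_eq ma Ea; have rv := rank_eq mb Eb.
rewrite -ed -ei in rv.
have key : forall p q, p \in img a -> cmp c p q ->
   #|[set z in img a | cmp c z p]| < #|[set z in img a | cmp c z q]|.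
  move=> p q pi hpq; apply: proper_card; apply/properP; split.
  - by apply/subsetP=> z; rewrite !inE => /andP [-> h]; apply: cmp_trans h hpq.
  - exists p; first by rewrite inE pi hpq.
    by rewrite inE (negbTE (cmp_irr _ _)) andbF.
have ui : u \in img a by apply: some_img Ea.
have vi : v \in img a by rewrite ei (some_img Eb).
case/orP: (cmp_total c neq) => h.
- by have := key u v ui h; rewrite ru rv ltnn.
- by have := key v u vi h; rewrite ru rv ltnn.
Qed.

End Basics.

Section Bridge.
Variable n : nat.
Implicit Types (a b e : partmap n) (x y z u v w : 'I_n) (D : {set 'I_n}).

Lemma pinjP a : reflect (injd a) (pinj a).
Proof.
apply: (iffP forallP) => [h x y u ex ey|h x].
- have /forallP /(_ y) := h x; rewrite ex ey eqxx /= => /eqP; exact.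
- apply/forallP=> y; apply/implyP => /andP [].
  case E: (a x) => [u|] // _ /eqP /esym E'.
  by apply/eqP; apply: (h _ _ u).
Qed.

Lemma monoP c a : reflect (mono c a) (if c then order_rev a else order_pres a).
Proof.
case: c; (apply: (iffP forallP) => [h x y u v ex ey xy|h x];
  [ have /forallP /(_ y) /implyP := h x; rewrite ex ey; exact
  | apply/forallP=> y; apply/implyP => xy;
    case E: (a x) => [u|] //; case E': (a y) => [v|] //; exact: h _ _ _ _ E E' xy]).
Qed.

Definition altP a := exists s : {perm 'I_n}, ~~ odd_perm s /\ forall x, x \in dom a -> a x = Some (s x).

Lemma alt_restrP a : reflect (altP a) (alt_restr a).
Proof.
apply: (iffP existsP) => [[s /andP [hs /forallP h]]|[s [hs h]]].
- exists s; split => // x xd; have /implyP := h x; rewrite -in_dom => /(_ xd) /eqP; exact.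
- exists s; rewrite hs /=; apply/forallP=> x; apply/implyP; rewrite -in_dom => xd.
  by rewrite h.
Qed.

Definition AMP a := (exists c, mono c a) /\ altP a.

Lemma inAM a : a \in AM n <-> AMP a.
Proof.
rewrite /AM /AI /PMI /In_ !inE; split.
- case/andP=> /andP [_ /alt_restrP al] /andP [_ m]; split => //.
  by case/orP: m => m; [exists false; apply/(monoP false) | exists true; apply/(monoP true)].
- case=> [[c m] /alt_restrP al]; rewrite al /=.
  have /pinjP -> := mono_inj m; rewrite /=.
  by case: c m => /monoP m; rewrite m ?orbT.
Qed.

Lemma AMP_mul a b : AMP a -> AMP b -> AMP (pmul a b).
Proof.
move=> [[c ma] [s [hs Hs]]] [[d mb] [t [ht Ht]]]; split.
  by exists (c (+) d); apply: monoM.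
exists (s * t)%g; split; first by rewrite odd_permM; move: hs ht; case: (odd_perm s); case: (odd_perm t).
move=> x; rewrite in_dom pmulE; case E: (a x) => [y|] // yd.
have := Hs x; rewrite in_dom E => /(_ isT) [e].
by rewrite permM -e Ht // in_dom.
Qed.

Lemma AMP_pid : AMP (@pid n).
Proof.
split; first by exists false => x y u v; rewrite !ffunE => -[<-] [<-].
by exists 1%g; split; [rewrite odd_perm1 | move=> x _; rewrite ffunE perm1].
Qed.

Variable S : {set partmap n}.
Definition inT f := exists s, all (fun g => g \in S) s /\ f = foldl (@pmul n) (@pid n) s.

Lemma inT_pid : inT (@pid n).
Proof. by exists [::]. Qed.

Lemma inT_gen g : g \in S -> inT g.
Proof. by move=> gS; exists [:: g]; rewrite /= gS pid1m. Qed.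

Lemma inT_mul a b : inT a -> inT b -> inT (pmul a b).
Proof.
move=> [s [hs ->]] [t [ht ->]]; exists (s ++ t); rewrite all_cat hs ht; split => //.
by rewrite foldl_cat [in RHS]foldl_pmul.
Qed.

Lemma inT_AMP : (forall g, g \in S -> AMP g) -> forall f, inT f -> AMP f.
Proof.
move=> hS f [s [hs ->]]; elim/last_ind: s hs => [|s g IH]; first by rewrite /= => _; apply: AMP_pid.
rewrite all_rcons => /andP [gS hs]; rewrite foldl_rcons; apply: AMP_mul; [exact: IH | exact: hS].
Qed.

End Bridge.
Definition opv (a b y : nat) : nat :=
  if (if y < a then y else y.-1) < b then (if y < a then y else y.-1)
  else (if y < a then y else y.-1).+1.

Definition hv (N a y : nat) : nat :=
  if N.-2 - (if y < a then y else y.-1) < a then N.-2 - (if y < a then y else y.-1)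
  else (N.-2 - (if y < a then y else y.-1)).+1.

Ltac splitif := rewrite ?/opv ?/hv ?/rank_in ?/elt_of_rank; repeat case: ifP; move=> *; lia.

Lemma opv_eq a b y : y != a -> (elt_of_rank b.+1 (rank_in a.+1 y.+1)).-1 = opv a b y.
Proof. move=> ?; splitif. Qed.
Lemma opv_lt a b y N : y < N -> a < N -> b < N -> y != a -> opv a b y < N.
Proof. move=> *; splitif. Qed.
Lemma opv_neq a b y : y != a -> opv a b y != b.
Proof. move=> *; splitif. Qed.
Lemma opv_mono a b y z : y < z -> y != a -> z != a -> opv a b y < opv a b z.
Proof. move=> *; splitif. Qed.
Lemma opv_inv a b w : w != b -> opv a b (opv b a w) = w.
Proof. move=> *; splitif. Qed.
Lemma opv_inv_neq a b w : w != b -> opv b a w != a.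
Proof. move=> *; splitif. Qed.

Lemma hv_eq N a y : y != a -> y < N -> a < N -> (elt_of_rank a.+1 (N - rank_in a.+1 y.+1)).-1 = hv N a y.
Proof. move=> *; splitif. Qed.
Lemma hv_lt N a y : y < N -> a < N -> y != a -> hv N a y < N.
Proof. move=> *; splitif. Qed.
Lemma hv_neq N a y : y < N -> a < N -> y != a -> hv N a y != a.
Proof. move=> *; splitif. Qed.
Lemma hv_mono N a y z : y < z -> z < N -> a < N -> y != a -> z != a -> hv N a z < hv N a y.
Proof. move=> *; splitif. Qed.
Lemma hv_inv N a w : w < N -> a < N -> w != a -> hv N a (hv N a w) = w.
Proof. move=> *; splitif. Qed.

Lemma opv_le2 a b y : y != a -> b = a + 2 -> opv a b y <= y.
Proof. move=> *; splitif. Qed.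
Lemma opv_lt2 a b y : b = a + 2 -> (y == a.+1) || (y == a.+2) -> opv a b y < y.
Proof. move=> ? /orP [] /eqP ?; splitif. Qed.

Lemma gapchain (P : nat -> bool) t : forall g e, e - g = t -> g < e -> ~~ P g ->
  exists i, [/\ g <= i < e, ~~ P i & P i.+1 || (i.+1 == e)].
Proof.
elim: t => [|t IH] g e et ge nP; first by lia.
case: (boolP (P g.+1 || (g.+1 == e))) => [h|]; first by exists g; rewrite leqnn ge.
rewrite negb_or => /andP [nP1 ne].
have [i [h1 h2 h3]] := IH g.+1 e ltac:(lia) ltac:(lia) nP1.
by exists i; split => //; lia.
Qed.

Section OpH.
Variable n : nat.
Implicit Types (x y z u v w : 'I_n).

Lemma of_labels_some (f : nat -> option nat) y k :
  f y.+1 = Some k -> k.-1 < n -> exists z, of_labels n f y = Some z /\ val z = k.-1.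
Proof.
move=> e lt; rewrite /of_labels ffunE e /=.
case: insubP => [z _ ez|]; first by exists z.
by rewrite lt.
Qed.

Lemma of_labels_none (f : nat -> option nat) y :
  f y.+1 = None -> of_labels n f y = None.
Proof. by move=> e; rewrite /of_labels ffunE e. Qed.

Variables a b : 'I_n.
Let op := op_map n a.+1 b.+1.
Let hh := h n a.+1.

Lemma op_some y : y != a -> exists z, op y = Some z /\ val z = opv a b y.
Proof.
move=> ya; have ya' : val y != val a by [].
have h1 : (fun k => if k == a.+1 then None else Some (elt_of_rank b.+1 (rank_in a.+1 k))) y.+1
  = Some (elt_of_rank b.+1 (rank_in a.+1 y.+1)) by rewrite /= eqSS (negbTE ya').
have h2 : (elt_of_rank b.+1 (rank_in a.+1 y.+1)).-1 < n by rewrite opv_eq // opv_lt.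
have [z [ez vz]] := of_labels_some (f := fun k => if k == a.+1 then None else Some (elt_of_rank b.+1 (rank_in a.+1 k))) (y := y) h1 h2.
by exists z; rewrite /op /op_map ez vz opv_eq.
Qed.

Lemma op_none : op a = None.
Proof. by rewrite /op /op_map of_labels_none //= eqxx. Qed.

Lemma op_dom : dom op = [set~ a].
Proof.
apply/setP=> y; rewrite in_dom !inE; case: (eqVneq y a) => [->|ya].
  by rewrite op_none.
by have [z [-> _]] := op_some ya.
Qed.

Lemma op_mono : mono false op.
Proof.
move=> y z u v ey ez yz.
have ya : y != a by apply: contraTneq (some_dom ey) => ->; rewrite op_dom !inE eqxx.
have za : z != a by apply: contraTneq (some_dom ez) => ->; rewrite op_dom !inE eqxx.
have [u' [eu' vu']] := op_some ya; have [v' [ev' vv']] := op_some za.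
rewrite ey in eu'; rewrite ez in ev'; case: eu' => ->; case: ev' => ->.
by rewrite /cmp /= vu' vv' opv_mono.
Qed.

Lemma op_img : img op = [set~ b].
Proof.
apply/setP=> w; rewrite in_setC1; apply/in_img/idP => [[y ey]|wb].
- have ya : y != a by apply: contraTneq (some_dom ey) => ->; rewrite op_dom !inE eqxx.
  have [u [eu vu]] := op_some ya; rewrite ey in eu; case: eu => ->.
  by apply/eqP => /(congr1 val); rewrite /= vu; apply/eqP/opv_neq.
- have wb' : val w != val b by [].
  have lt : opv b a w < n by apply: opv_lt.
  have ya : Ordinal lt != a by rewrite -val_eqE /= opv_inv_neq.
  have [u [eu vu]] := op_some ya; exists (Ordinal lt); rewrite eu; congr Some.
  by apply: val_inj; rewrite vu /= opv_inv.
Qed.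

Lemma h_some y : y != a -> exists z, hh y = Some z /\ val z = hv n a y.
Proof.
move=> ya; have ya' : val y != val a by [].
have h1 : (fun k => if k == a.+1 then None else Some (elt_of_rank a.+1 (n - rank_in a.+1 k))) y.+1
  = Some (elt_of_rank a.+1 (n - rank_in a.+1 y.+1)) by rewrite /= eqSS (negbTE ya').
have h2 : (elt_of_rank a.+1 (n - rank_in a.+1 y.+1)).-1 < n by rewrite hv_eq // hv_lt.
have [z [ez vz]] := of_labels_some (f := fun k => if k == a.+1 then None else Some (elt_of_rank a.+1 (n - rank_in a.+1 k))) (y := y) h1 h2.
by exists z; rewrite /hh /h ez vz hv_eq.
Qed.

Lemma h_none : hh a = None.
Proof. by rewrite /hh /h of_labels_none //= eqxx. Qed.

Lemma h_dom : dom hh = [set~ a].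
Proof.
apply/setP=> y; rewrite in_dom !inE; case: (eqVneq y a) => [->|ya].
  by rewrite h_none.
by have [z [-> _]] := h_some ya.
Qed.

Lemma h_mono : mono true hh.
Proof.
move=> y z u v ey ez yz.
have ya : y != a by apply: contraTneq (some_dom ey) => ->; rewrite h_dom !inE eqxx.
have za : z != a by apply: contraTneq (some_dom ez) => ->; rewrite h_dom !inE eqxx.
have [u' [eu' vu']] := h_some ya; have [v' [ev' vv']] := h_some za.
rewrite ey in eu'; rewrite ez in ev'; case: eu' => ->; case: ev' => ->.
by rewrite /cmp /= vu' vv' hv_mono.
Qed.

Lemma h_img : img hh = [set~ a].
Proof.
apply/setP=> w; rewrite in_setC1; apply/in_img/idP => [[y ey]|wa].
- have ya : y != a by apply: contraTneq (some_dom ey) => ->; rewrite h_dom !inE eqxx.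
  have [u [eu vu]] := h_some ya; rewrite ey in eu; case: eu => ->.
  by apply/eqP => /(congr1 val); rewrite /= vu; apply/eqP/hv_neq.
- have wa' : val w != val a by [].
  have lt : hv n a w < n by apply: hv_lt.
  have ya : Ordinal lt != a by rewrite -val_eqE /= hv_neq.
  have [u [eu vu]] := h_some ya; exists (Ordinal lt); rewrite eu; congr Some.
  by apply: val_inj; rewrite vu /= hv_inv.
Qed.

End OpH.


Section Perms.

Lemma tpermV n (a b z : 'I_n) :
  (tperm a b z : nat) = if (z : nat) == a then (b : nat) else if (z : nat) == b then (a : nat) else z.
Proof.
case: (tpermP a b z) => [->|->|za zb]; first by rewrite eqxx.
- by case: eqP => [->|_]; rewrite ?eqxx.
- have -> : ((z : nat) == a) = false by apply/negbTE/eqP => /val_inj.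
  by have -> : ((z : nat) == b) = false by apply/negbTE/eqP => /val_inj.
Qed.

Definition Rev n : {perm 'I_n} := perm (@rev_ord_inj n).

Lemma RevE n (y : 'I_n) : (Rev n y : nat) = n - y.+1.
Proof. by rewrite permE. Qed.

Lemma odd_Rev m : odd_perm (Rev m) = odd m./2.
Proof.
elim: m => [|m IH].
  have -> : Rev 0 = 1%g by apply/permP => -[].
  by rewrite odd_perm1.
have -> : Rev m.+1 = lift_perm ord0 ord_max (Rev m).
  apply/permP => y; case: (unliftP ord0 y) => [k ->|->].
  - rewrite lift_perm_lift; apply: val_inj; rewrite /= RevE /bump /= RevE.
    move: (ltn_ord k) => kl; rewrite /bump leq0n add1n.
    have -> : (m <= m - k.+1) = false by lia.
    rewrite add0n; lia.
  - rewrite lift_perm_id; apply: val_inj; rewrite /= RevE subSS; exact: subn0.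
rewrite odd_lift_perm IH /= -/(uphalf m) uphalf_half oddD oddb.
by case: (odd m).
Qed.

End Perms.

Section Gen.
Variable n : nat.
Hypothesis n6 : 6 <= n.
Hypothesis n4 : n %% 4 = 2.
Implicit Types (f g : partmap n) (i j k l : 'I_n) (D I : {set 'I_n}).

Let S := gen_set n.
Let T := inT S.

Definition G c i j := exists f, T f /\ mono c f /\ dom f = [set~ i] /\ img f = [set~ j].

Lemma G_comp c d i j l : G c i j -> G d j l -> G (c (+) d) i l.
Proof.
move=> [f [Tf [mf [df if_]]]] [g [Tg [mg [dg ig]]]].
exists (pmul f g); split; first exact: inT_mul.
split; first exact: monoM.
by rewrite dom_exact ?img_exact // if_ dg.
Qed.

Definition Dn j i := j = i \/ G false j i.

Lemma Dn_G c i j l : Dn j i -> G c i l -> G c j l.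
Proof. by case=> [->//|h] h'; have := G_comp h h'. Qed.

Lemma G_Dn c i j l : G c i j -> Dn j l -> G c i l.
Proof. by move=> h; case=> [<-//|h']; have := G_comp h h'; rewrite addbF. Qed.

Lemma gen_x i j : (j : nat) = i + 2 -> G false j i.
Proof.
move=> ej; exists (x n j.+1); split.
  apply: inT_gen; rewrite /S /gen_set inE; apply/orP; right.
  rewrite inE; apply/mapP; exists j.+1 => //; rewrite mem_iota; move: (ltn_ord j) => ?.
lia.
have -> : x n j.+1 = op_map n j.+1 i.+1.
  rewrite /x; have -> : (j.+1 == 1) = false by lia.
  have -> : (j.+1 == 2) = false by lia.
  by have -> : j.+1 - 2 = i.+1 by lia.
by rewrite op_dom op_img; split => //; apply: op_mono.
Qed.

Lemma gen_h1 i j : (i : nat) = 0 -> (j : nat) = n - 2 -> G true i j.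
Proof.
move=> ei ej; exists (pmul (x n 1) (h n n.-1)); split.
  by apply: inT_gen; rewrite /S /gen_set !inE eqxx.
have -> : x n 1 = op_map n i.+1 j.+1.
  rewrite /x /=; have -> : odd n = false by lia.
  have -> : n.-1 = j.+1 by lia.
  by have -> : 1 = i.+1 by lia.
have -> : h n n.-1 = h n j.+1 by congr h; lia.
rewrite dom_exact ?img_exact ?op_dom ?h_img ?op_img ?h_dom //; split => //.
by have := monoM (@op_mono n i j) (@h_mono n j).
Qed.

Lemma gen_h2 i j : (i : nat) = 1 -> (j : nat) = n - 1 -> G true i j.
Proof.
move=> ei ej; exists (pmul (x n 2) (h n n)); split.
  by apply: inT_gen; rewrite /S /gen_set !inE eqxx orbT.
have -> : x n 2 = op_map n i.+1 j.+1.
  rewrite /x /=; have -> : odd n = false by lia.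
  have -> : op_map n 2 n = op_map n 2 j.+1 by f_equal; lia.
  by have -> : 2 = i.+1 by lia.
have -> : h n n = h n j.+1 by f_equal; lia.
rewrite dom_exact ?img_exact ?op_dom ?h_img ?op_img ?h_dom //; split => //.
by have := monoM (@op_mono n i j) (@h_mono n j).
Qed.

Lemma Dn_step m i j : (j : nat) = i + 2 * m -> Dn j i.
Proof.
elim: m j => [|m IH] j ej; first by left; apply: val_inj => /=; lia.
have lt : i + 2 * m < n by move: (ltn_ord j) => ?; lia.
right; have := IH (Ordinal lt) erefl; case => [e|g].
  by rewrite -e; apply: gen_x => /=; lia.
have := G_comp (gen_x (i := Ordinal lt) (j := j) _) g; apply => /=; lia.
Qed.

Lemma Dn_par i j : i <= j -> odd i = odd j -> Dn j i.
Proof. move=> *; apply: (Dn_step (m := (j - i)./2)); lia. Qed.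

Lemma Gall c i j : odd i = odd j -> G c i j.
Proof.
move=> oij.
have l0 : 0 < n by lia. have l1 : 1 < n by lia.
have l2 : n - 2 < n by lia. have l3 : n - 1 < n by lia.
pose o0 := Ordinal l0; pose o1 := Ordinal l1; pose o2 := Ordinal l2; pose o3 := Ordinal l3.
have Gt0 : G true o0 o2 by apply: gen_h1.
have Gt1 : G true o1 o3 by apply: gen_h2.
have Gc0 : G c o0 o2.
  case: c; first exact: Gt0.
  have := G_comp (G_Dn Gt0 (Dn_par (i := o0) (j := o2) _ _)) Gt0; apply => /=; lia.
have Gc1 : G c o1 o3.
  case: c Gc0 => _; first exact: Gt1.
  have := G_comp (G_Dn Gt1 (Dn_par (i := o1) (j := o3) _ _)) Gt1; apply => /=; lia.
move: (ltn_ord i) (ltn_ord j) => li lj.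
case oi: (odd i).
- apply: (Dn_G (i := o1)); first by apply: Dn_par => /=; lia.
  by apply: (G_Dn Gc1); apply: Dn_par => /=; lia.
- apply: (Dn_G (i := o0)); first by apply: Dn_par => /=; lia.
  by apply: (G_Dn Gc0); apply: Dn_par => /=; lia.
Qed.


Definition pidon (D : {set 'I_n}) : partmap n := [ffun x => if x \in D then Some x else None].

Lemma pidon_mono D : mono false (pidon D).
Proof. by move=> x y u v; rewrite !ffunE; case: ifP => // _ [<-]; case: ifP => // _ [<-]. Qed.

Lemma pidon_dom D : dom (pidon D) = D.
Proof. by apply/setP=> x; rewrite in_dom ffunE; case: ifP. Qed.

Lemma pidon_img D : img (pidon D) = D.
Proof.
apply/setP=> y; apply/in_img/idP => [[x]|yD]; last by exists y; rewrite ffunE yD.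
by rewrite ffunE; case: ifP => // xD [<-].
Qed.

Lemma Top i j : odd i = odd j -> T (op_map n i.+1 j.+1).
Proof.
move=> oij; have [f [Tf [mf [df if_]]]] := Gall false oij.
suff <- : f = op_map n i.+1 j.+1 by [].
apply: (mono_uniq mf (@op_mono n i j)); by rewrite ?op_dom ?op_img.
Qed.

Lemma T_pidon1 i : T (pidon [set~ i]).
Proof.
have [f [Tf [mf [df if_]]]] := Gall false (erefl (odd i)).
suff <- : f = pidon [set~ i] by [].
apply: (mono_uniq mf (pidon_mono (D := [set~ i]))); by rewrite ?pidon_dom ?pidon_img.
Qed.

Lemma T_pidon D : D != setT -> T (pidon D).
Proof.
move=> DT.
have : 0 < #|~: D|.
  rewrite card_gt0; apply: contra DT => /eqP e.
  by rewrite -(setCK D) e setC0.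
clear DT; move Ek : #|~: D| => k; elim: k D Ek => [|k IH] D ek lt; first by [].
case: k IH ek lt => [|k] IH ek _.
  have /cards1P [g eg] : #|~: D| == 1 by rewrite ek.
  have -> : D = [set~ g] by rewrite -[D]setCK eg.
  exact: T_pidon1.
have /set0Pn [g gD] : ~: D != set0 by rewrite -card_gt0 ek.
have gD' : g \notin D by rewrite inE in gD.
have eD : pidon D = pmul (pidon (g |: D)) (pidon [set~ g]).
  apply/ffunP=> x; rewrite !pmulE !ffunE !inE.
  case: (eqVneq x g) => [->|xg] /=.
    by rewrite (negbTE gD') ffunE !inE eqxx.
  by case: ifP => // _; rewrite ffunE !inE xg.
rewrite eD; apply: inT_mul; last exact: T_pidon1.
apply: IH => //.
have := cardsD1 g (~: D); rewrite gD ek setCU setDE setIC => e.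
by move: e; rewrite add1n => -[].
Qed.


Definition Lk (k : nat) : {set 'I_n} := [set y : 'I_n | (y : nat) < k].

Lemma card_Lk (k : nat) : k <= n -> #|Lk k| = k.
Proof.
move=> kn.
have -> : Lk k = [set widen_ord kn z | z : 'I_k].
  apply/setP=> y; rewrite inE; apply/idP/imsetP => [yk|[z _ ->]]; last by rewrite /= ltn_ord.
  by exists (Ordinal yk) => //; apply: val_inj.
rewrite card_imset ?card_ord // => p q /(congr1 val) /= e; exact: val_inj.
Qed.

Definition dclosedb (D : {set 'I_n}) :=
  [forall x : 'I_n, forall y : 'I_n, ((y : nat) <= x) && (x \in D) ==> (y \in D)].

Lemma dc_L D : dclosedb D -> D = Lk #|D|.
Proof.
move=> /forallP dc; apply/setP=> x; rewrite inE; apply/idP/idP => [xD|xk].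
- have : Lk x.+1 \subset D.
    apply/subsetP=> y; rewrite inE ltnS => yx.
    by have /forallP /(_ y) /implyP := dc x; apply; rewrite yx xD.
  move=> /subset_leqif_cards [+ _]; rewrite card_Lk //; exact: ltn_ord.
- apply: contraTT xk => xD; rewrite -leqNgt.
  have : D \subset Lk x.
    apply/subsetP=> y yD; rewrite inE ltnNge; apply: contra xD => xy.
    by have /forallP /(_ x) /implyP := dc y; apply; rewrite xy yD.
  by move=> /subset_leqif_cards [+ _]; rewrite card_Lk // ltnW.
Qed.

Definition memN (D : {set 'I_n}) (k : nat) := [exists x in D, (x : nat) == k].

Lemma memN_ord D (x : 'I_n) : memN D x = (x \in D).
Proof.
apply/existsP/idP => [[y /andP [yD /eqP e]]|xD]; last by exists x; rewrite xD eqxx.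
by have <- : y = x by apply: val_inj.
Qed.

Lemma move_ex D : #|D| <= n - 2 -> ~~ dclosedb D ->
  exists i : nat, [/\ ~~ memN D i, i.+2 < n & memN D i.+1 || memN D i.+2].
Proof.
move=> cD /forallPn [x /forallPn [y]]; rewrite negb_imply => /andP [/andP [yx xD] yD].
have yx' : (y : nat) < x by rewrite ltn_neqAle yx andbT; apply: contraNneq yD => /val_inj ->.
have nPy : ~~ memN D y by rewrite memN_ord.
have [i [/andP [_ ix] nPi h]] := gapchain (erefl (x - y)) yx' nPy.
have Pi1 : memN D i.+1 by case/orP: h => // /eqP ->; rewrite memN_ord.
have xn := ltn_ord x.
case: (ltnP i.+2 n) => [lt|ge]; first by exists i; rewrite Pi1.
have ei : i = n - 2 by lia.
have lin : i < n by lia.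
pose io := Ordinal lin.
have : 0 < #|~: D :\ io|.
  have ioD : io \in ~: D by rewrite inE -memN_ord.
  have e1 : #|~: D| = 1 + #|~: D :\ io| by rewrite (cardsD1 io (~: D)) ioD.
  have e2 : #|D| + #|~: D| = n by rewrite cardsC card_ord.
  lia.
rewrite card_gt0 => /set0Pn [g]; rewrite !inE => /andP [gi gD].
have gn : (g : nat) < n - 2.
  have : (g : nat) != i by [].
  have : (g : nat) != n - 1 by apply: contra gD => /eqP e; rewrite -memN_ord e; move: Pi1; rewrite ei; have -> : (n - 2).+1 = n - 1 by lia.
  move: (ltn_ord g) => *; lia.
have nPg : ~~ memN D g by rewrite memN_ord.
have [j [/andP [gj jn] nPj hj]] := gapchain (erefl (n - 2 - g)) gn nPg.
exists j; split => //; first by lia.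
case/orP: hj => [->//|/eqP e].
have -> : j.+2 = i.+1 by lia.
by rewrite Pi1 orbT.
Qed.


Lemma tot_op (a b y : 'I_n) : y != a -> (tot (op_map n a.+1 b.+1) y : nat) = opv a b y.
Proof. by move=> ya; have [z [ez vz]] := op_some b ya; rewrite (some_tot ez). Qed.

Lemma compress N D : \sum_(x in D) (x : nat) < N -> #|D| <= n - 2 ->
  (exists f, T f /\ mono false f /\ dom f = D /\ img f = Lk #|D|) /\
  (exists f, T f /\ mono false f /\ dom f = Lk #|D| /\ img f = D).
Proof.
elim: N D => [|N IH] D //.
move=> sN cD.
case: (boolP (dclosedb D)) => [dc|ndc].
  have DT : D != setT.
    by apply/eqP => e; move: cD; rewrite e cardsT card_ord; lia.
  rewrite -(dc_L dc); split; exists (pidon D); split; (try exact: T_pidon); split;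
    (try exact: pidon_mono); by rewrite pidon_dom pidon_img.
have [i [nPi i2 Pi12]] := move_ex cD ndc.
have li : i < n by lia.
pose io := Ordinal li; pose i2o := Ordinal i2.
pose b := op_map n io.+1 i2o.+1; pose b' := op_map n i2o.+1 io.+1.
have Tb : T b by apply: Top; rewrite /io /i2o /= negbK.
have Tb' : T b' by apply: Top; rewrite /io /i2o /= negbK.
have mb := @op_mono n io i2o; have mb' := @op_mono n i2o io.
have ib := mono_inj mb.
have sD : D \subset dom b.
  apply/subsetP=> x xD; rewrite op_dom in_setC1; apply/eqP => e; move: nPi.
  have -> : i = x by rewrite e.
  by rewrite memN_ord xD.
pose D' := tot b @: D.
have injD : {in D &, injective (tot b)}.
  by move=> x y hx hy; apply: (tot_inj ib); apply: (subsetP sD).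
have cD' : #|D'| = #|D| := card_in_imset injD.
have xio : forall x, x \in D -> x != io.
  by move=> x /(subsetP sD); rewrite op_dom in_setC1.
have tle : forall x, x \in D -> (tot b x : nat) <= x.
  by move=> x xD; rewrite tot_op ?xio //; apply: opv_le2; rewrite ?xio //= addn2.
have [d dD dlt] : exists2 d, d \in D & (tot b d : nat) < d.
  case/orP: Pi12 => /existsP [d /andP [dD /eqP ed]]; exists d => //;
    rewrite tot_op ?xio //; apply: opv_lt2; rewrite /= ?addn2 // ed eqxx ?orbT //.
have sD' : \sum_(x in D') (x : nat) < N.
  suff key : \sum_(x in D) (tot b x : nat) < \sum_(x in D) (x : nat).
    by rewrite big_imset //; exact: (leq_trans key sN).
  have h1 : \sum_(x in D) (tot b x : nat) = tot b d + \sum_(x in D | x != d) (tot b x : nat).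
    by rewrite (bigD1 d dD).
  have h2 : \sum_(x in D) (x : nat) = d + \sum_(x in D | x != d) (x : nat).
    by rewrite (bigD1 d dD).
  have h3 : \sum_(x in D | x != d) (tot b x : nat) <= \sum_(x in D | x != d) (x : nat).
    by apply: leq_sum => x /andP [xD _]; apply: tle.
  lia.
have cD'' : #|D'| <= n - 2 by rewrite cD'.
have [[f [Tf [mf [df if_]]]] [g [Tg [mg [dg ig]]]]] := IH D' sD' cD''.
split.
- exists (pmul b f); split; first exact: inT_mul.
  split; first exact: (monoM mb mf).
  rewrite (dom_pre ib sD df) img_pre ?if_ ?cD' //.
  rewrite df; apply/subsetP => z /imsetP [x xD ->]; apply: tot_img; exact: (subsetP sD).
- have sg : img g \subset dom b'.
    rewrite ig op_dom; apply/subsetP => z /imsetP [x xD ->]; rewrite in_setC1.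
    by have := tot_img (subsetP sD _ xD); rewrite op_img in_setC1.
  exists (pmul g b'); split; first exact: inT_mul.
  split; first exact: (monoM mg mb').
  rewrite dom_post // dg cD'; split => //.
  rewrite img_post // ig -imset_comp -[RHS]imset_id; apply: eq_in_imset => x xD /=.
  have xi := xio x xD.
  have [z [ez vz]] := op_some i2o xi.
  have zi : z != i2o.
    apply/eqP => e; have : (z : nat) = i.+2 by rewrite e.
    rewrite vz => h; have xi' : (x : nat) != i := xi.
    by have := opv_neq i.+2 xi'; rewrite h eqxx.
  rewrite (some_tot ez); apply: val_inj; change (nat_of_ord (tot b' z) = nat_of_ord x).
  rewrite /b' tot_op // vz /=.
  by apply: opv_inv; exact: xi.
Qed.


Lemma ordP (k : nat) : k < n -> {o : 'I_n | (o : nat) = k}.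
Proof. by move=> lt; exists (Ordinal lt). Qed.

Lemma ord_eq (u v : 'I_n) : (u : nat) = v -> u = v.
Proof. exact: val_inj. Qed.

Lemma gen_AMP g : g \in S -> AMP g.
Proof.
have [o0 e0] := @ordP 0 ltac:(lia).
have [o1 e1] := @ordP 1 ltac:(lia).
have [o2 e2] := @ordP (n - 2) ltac:(lia).
have [o3 e3] := @ordP (n - 1) ltac:(lia).
have odd_s : ~~ odd_perm (Rev n * tperm o2 o3)%g.
  rewrite odd_permM odd_Rev odd_tperm.
  have -> : odd n./2 = true by lia.
  by have -> : o2 != o3 by apply/eqP => /(congr1 val) /=; rewrite e2 e3; lia.
rewrite /S /gen_set !inE => /orP [/orP [] /eqP -> |].
- have E1 : x n 1 = op_map n o0.+1 o2.+1.
    rewrite /x /=; have -> : odd n = false by lia.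
    rewrite e0 e2; f_equal; lia.
  have E2 : h n n.-1 = h n o2.+1 by rewrite e2; f_equal; lia.
  rewrite E1 E2; split; first by exists true; exact: (monoM (@op_mono n o0 o2) (@h_mono n o2)).
  exists (Rev n * tperm o2 o3)%g; split => // y.
  rewrite dom_exact ?op_img ?h_dom // op_dom in_setC1 => yo.
  have [z [ez vz]] := op_some o2 yo.
  have zo : z != o2 by apply/eqP => e; move: (opv_neq o2 yo); rewrite -vz e eqxx.
  have [w [ew vw]] := h_some zo.
  rewrite pmulE ez ew; congr Some; apply: ord_eq.
  rewrite vw permM tpermV RevE vz e0 e2 e3.
  have yo' : (y : nat) != 0 by rewrite -e0.
  move: (ltn_ord y) => yl; move: yo'.
  rewrite /hv /opv !ltn0; repeat case: ifP; move=> *; lia.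
- have E1 : x n 2 = op_map n o1.+1 o3.+1.
    rewrite /x /=; have -> : odd n = false by lia.
    have -> : op_map n 2 n = op_map n 2 o3.+1 by f_equal; lia.
    by rewrite e1.
  have E2 : h n n = h n o3.+1 by f_equal; lia.
  rewrite E1 E2; split; first by exists true; exact: (monoM (@op_mono n o1 o3) (@h_mono n o3)).
  exists (Rev n * tperm o2 o3)%g; split => // y.
  rewrite dom_exact ?op_img ?h_dom // op_dom in_setC1 => yo.
  have [z [ez vz]] := op_some o3 yo.
  have zo : z != o3 by apply/eqP => e; move: (opv_neq o3 yo); rewrite -vz e eqxx.
  have [w [ew vw]] := h_some zo.
  rewrite pmulE ez ew; congr Some; apply: ord_eq.
  rewrite vw permM tpermV RevE vz e1 e2 e3.
  have yo' : (y : nat) != 1 by rewrite -e1.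
  move: (ltn_ord y) => yl; move: yo'.
  rewrite /hv /opv; repeat case: ifP; move=> *; lia.
- case/mapP => k; rewrite mem_iota => kr ->.
  have [oj ej] := @ordP k.-1 ltac:(lia).
  have [oi ei] := @ordP (k - 3) ltac:(lia).
  have [oi1 ei1] := @ordP (k - 2) ltac:(lia).
  have E : x n k = op_map n oj.+1 oi.+1.
    rewrite /x; have -> : (k == 1) = false by lia.
    have -> : (k == 2) = false by lia.
    rewrite ej ei; f_equal; lia.
  rewrite E; split; first by exists false; exact: op_mono.
  exists (tperm oi oj * tperm oi1 oj)%g; split.
    rewrite odd_permM !odd_tperm.
    have -> : oi != oj by apply/eqP => /(congr1 val) /=; rewrite ei ej; lia.
    by have -> : oi1 != oj by apply/eqP => /(congr1 val) /=; rewrite ei1 ej; lia.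
  move=> y; rewrite op_dom in_setC1 => yo.
  have [z [ez vz]] := op_some oi yo.
  rewrite ez; congr Some; apply: ord_eq.
  rewrite vz permM !tpermV ei ej ei1.
  have yo' : (y : nat) != k.-1 by rewrite -ej.
  move: yo'; rewrite /opv; repeat case: ifP; move=> *; lia.
Qed.

Lemma T_AMP f : T f -> AMP f.
Proof. by move=> Tf; apply: (@inT_AMP n S gen_AMP f Tf). Qed.


Lemma good_op D I : #|D| = #|I| -> #|D| <= n - 2 ->
  exists f, T f /\ mono false f /\ dom f = D /\ img f = I.
Proof.
move=> cDI cD; have cI : #|I| <= n - 2 by rewrite -cDI.
have [[f [Tf [mf [df if_]]]] _] := compress (ltnSn (\sum_(x in D) (x : nat))) cD.
have [_ [g [Tg [mg [dg ig]]]]] := compress (ltnSn (\sum_(x in I) (x : nat))) cI.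
exists (pmul f g); split; first exact: inT_mul.
split; first exact: (monoM mf mg).
by rewrite dom_exact ?img_exact // if_ dg cDI.
Qed.

Lemma good_rev D I : #|D| = #|I| -> #|D| <= n - 2 ->
  exists f, T f /\ mono true f /\ dom f = D /\ img f = I.
Proof.
move=> cDI cD.
have : ~~ ([set: 'I_n] \subset D).
  apply/negP => sT; have [+ _] := subset_leqif_cards sT; rewrite cardsT card_ord; lia.
case/subsetPn => i _ iD.
have [r [Tr [mr [dr ir]]]] := Gall true (erefl (odd i)).
have ri := mono_inj mr.
have sD : D \subset dom r.
  by rewrite dr; apply/subsetP => y yD; rewrite in_setC1; apply: contraNneq iD => <-.
pose D' := tot r @: D.
have cD' : #|D'| = #|D|.
  by apply: card_in_imset => p q hp hq; apply: (tot_inj ri); apply: (subsetP sD).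
have cD'' : #|D'| <= n - 2 by rewrite cD'.
have [g [Tg [mg [dg ig]]]] := good_op (D := D') (I := I) (etrans cD' cDI) cD''.
exists (pmul r g); split; first exact: inT_mul.
split; first exact: (monoM mr mg).
rewrite (dom_pre ri sD dg) img_pre // dg; apply/subsetP => z /imsetP [y yD ->].
by apply: tot_img; apply: (subsetP sD).
Qed.

Lemma adj a i j : AMP a -> mono false a -> dom a = [set~ i] -> img a = [set~ j] ->
  (j : nat) = i.+1 \/ (i : nat) = j.+1 -> False.
Proof.
move=> [_ [s [hs Hs]]] ma da ia hij.
have ea : a = op_map n i.+1 j.+1.
  by apply: (mono_uniq ma (@op_mono n i j)); rewrite ?op_dom ?op_img.
have sx : forall y, y != i -> s y = tperm i j y.
  move=> y yi; have : a y = Some (s y) by apply: Hs; rewrite da in_setC1.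
  rewrite ea; have [z [ez vz]] := op_some j yi; rewrite ez => -[<-]; apply: ord_eq.
  rewrite vz tpermV; have yi' : (y : nat) != i := yi.
  move: yi'; rewrite /opv; case: hij => ?; repeat case: ifP; move=> *; lia.
have si : s i = j.
  apply/eqP; apply: contraT => sij.
  have : s i \in img a by rewrite ia in_setC1.
  case/in_img => y ey; have yd := some_dom ey.
  have := Hs y yd; rewrite ey => -[] /perm_inj e.
  by move: yd; rewrite da in_setC1 e eqxx.
have es : s = tperm i j.
  by apply/permP => y; case: (eqVneq y i) => [->|yi]; [rewrite si tpermL | exact: sx].
move: hs; rewrite es odd_tperm.
by have -> : i != j by apply/eqP => e; move: hij; rewrite e; lia.
Qed.

Lemma mismatch c a i j : AMP a -> mono c a -> dom a = [set~ i] -> img a = [set~ j] ->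
  odd i != odd j -> False.
Proof.
move=> Aa ma da ia oij.
have [l [ol hl]] : exists l : 'I_n, odd l = odd j /\ ((l : nat) = i.+1 \/ (i : nat) = l.+1).
  case: (ltnP i.+1 n) => h.
    exists (Ordinal h); split; last by left.
    by move: oij; rewrite /= -eqbF_neg; case: (odd i); case: (odd j).
  have h' : i.-1 < n by move: (ltn_ord i) => ?; lia.
  exists (Ordinal h'); split; last by right => /=; lia.
  have -> : (Ordinal h' : nat) = i.-1 by [].
  have -> : odd i.-1 = ~~ odd i by have := ltn_ord i; lia.
  by move: oij; rewrite -eqbF_neg; case: (odd i); case: (odd j).
have [b [Tb [mb [db ib]]]] := Gall c (esym ol).
apply: (@adj (pmul a b) i l); first exact: (AMP_mul Aa (T_AMP Tb)).
- by have := monoM ma mb; rewrite addbb.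
- by rewrite dom_exact // ia db.
- by rewrite img_exact // ia db.
- by case: hl; [left | right].
Qed.

Lemma pid_pidon : @pid n = pidon setT.
Proof. by apply/ffunP => x; rewrite !ffunE inE. Qed.

Lemma full_dom a : AMP a -> dom a = setT -> a = @pid n.
Proof.
move=> Aa da; have [[c ma] [s [hs Hs]]] := Aa.
have ia : img a = setT.
  apply/setP => y; rewrite in_setT; apply/in_img; exists (s^-1 y)%g.
  by rewrite Hs ?permKV // da inE.
case: c ma => ma; last first.
  by rewrite pid_pidon; apply: (mono_uniq ma (pidon_mono (D := setT))); rewrite ?pidon_dom ?pidon_img.
exfalso.
pose ra : partmap n := [ffun x => Some (Rev n x)].
have mra : mono true ra.
  by move=> x y u v; rewrite !ffunE => -[<-] [<-] xy; rewrite /cmp /= !RevE; move: (ltn_ord y) => ?; lia.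
have dra : dom ra = setT by apply/setP => x; rewrite in_dom ffunE inE.
have RR : forall y, Rev n (Rev n y) = y by move=> y; apply: ord_eq; rewrite !RevE; move: (ltn_ord y) => ?; lia.
have ira : img ra = setT.
  by apply/setP => y; rewrite in_setT; apply/in_img; exists (Rev n y); rewrite ffunE RR.
have ea : a = ra by apply: (mono_uniq ma mra); rewrite ?da ?ia ?dra ?ira.
have [o0 e0] := @ordP 0 ltac:(lia).
have [o3 e3] := @ordP (n - 1) ltac:(lia).
have Tb := T_pidon1 o0.
apply: (@mismatch true (pmul (pidon [set~ o0]) a) o0 o3).
- exact: (AMP_mul (T_AMP Tb) Aa).
- by have := monoM (pidon_mono (D := [set~ o0])) ma.
- by rewrite dom_post ?pidon_dom // da subsetT.
- rewrite img_post ?pidon_img ?da ?subsetT // ea.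
  apply/setP => y; rewrite in_setC1; apply/imsetP/idP => [[x xo ->]|yo].
  + rewrite /tot ffunE /=; apply/eqP => /(congr1 val) /=; rewrite RevE e3.
    rewrite in_setC1 in xo; have : (x : nat) != 0 by rewrite -e0.
    move: (ltn_ord x) => *; lia.
  + exists (Rev n y); last by rewrite /tot ffunE /= RR.
    rewrite in_setC1; apply/eqP => /(congr1 val) /=; rewrite RevE e0.
    have : (y : nat) != n - 1 by rewrite -e3.
    move: (ltn_ord y) => *; lia.
- by rewrite e0 e3; apply/negP; lia.
Qed.

Lemma AM_T a : AMP a -> T a.
Proof.
move=> Aa; have [[c ma] al] := Aa; have ia := mono_inj ma.
have cimg : #|img a| = #|dom a|.
  by rewrite img_tot; apply: card_in_imset; exact: tot_inj.
case: (eqVneq (dom a) setT) => [dT|dT].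
  by rewrite (full_dom Aa dT); exact: inT_pid.
have : ~~ ([set: 'I_n] \subset dom a) by rewrite subTset.
case/subsetPn => i _ iD.
have sub : dom a \subset [set~ i].
  by apply/subsetP => y yD; rewrite in_setC1; apply: contraNneq iD => <-.
case: (leqP #|dom a| (n - 2)) => cd.
  have [f [Tf [mf [df if_]]]] : exists f, T f /\ mono c f /\ dom f = dom a /\ img f = img a.
    by case: c ma {Aa al} => ma; [apply: good_rev | apply: good_op].
  by rewrite (mono_uniq ma mf (esym df) (esym if_)).
have da : dom a = [set~ i].
  apply/eqP; rewrite eqEcard sub /= cardsC1 card_ord.
  have -> : n.-1 = (n - 2).+1 by lia.
  exact: cd.
have [s [hs Hs]] := al.
have ea : img a = [set~ s i].
  apply/setP => y; rewrite in_setC1; apply/in_img/idP => [[x ex]|ysi].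
  - have xd := some_dom ex; have := Hs x xd; rewrite ex => -[->].
    apply/eqP => /perm_inj e; move: xd; rewrite e da in_setC1 eqxx //.
  - exists (s^-1 y)%g; rewrite Hs ?permKV // da in_setC1.
    by apply/eqP => e; move: ysi; rewrite -e permKV eqxx.
case: (boolP (odd i == odd (s i))) => [/eqP o|o].
  have [f [Tf [mf [df if_]]]] := Gall c o.
  by rewrite (mono_uniq ma mf); rewrite ?da ?df ?ea ?if_.
by exfalso; apply: (mismatch Aa ma da ea o).
Qed.


Lemma first_factor (S' : {set partmap n}) i : (forall g, g \in S' -> AMP g) ->
  forall s, all (fun g => g \in S') s -> dom (foldl (@pmul n) (@pid n) s) = [set~ i] ->
  exists2 g, g \in S' & dom g = [set~ i].
Proof.
move=> hS; elim => [|g s IH] /=.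
  move=> _ e; have : i \in dom (@pid n) by rewrite in_dom ffunE.
  by rewrite e in_setC1 eqxx.
case/andP => gS hs; rewrite pid1m foldl_pmul.
case: (eqVneq (dom g) setT) => [dg|dg].
  by rewrite (full_dom (hS g gS) dg) pid1m; exact: IH.
move=> e; exists g => //.
have sub : [set~ i] \subset dom g.
  rewrite -e; apply/subsetP => x; rewrite domM inE in_dom.
  by case: (g x).
have iD : i \notin dom g.
  apply: contra dg => iD; apply/eqP/setP => x; rewrite in_setT.
  by case: (eqVneq x i) => [->//|xi]; apply: (subsetP sub); rewrite in_setC1.
apply/eqP; rewrite eqEsubset sub andbT; apply/subsetP => x xd; rewrite in_setC1.
by apply: contraNneq iD => <-.
Qed.

Lemma lower (S' : {set partmap n}) : generates (AM n) S' -> n <= #|S'|.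
Proof.
move=> gen.
have hS : forall g, g \in S' -> AMP g.
  move=> g gS; apply/inAM; apply/(gen g); exists [:: g]; by rewrite /= gS pid1m.
have key : forall i, exists2 g, g \in S' & dom g = [set~ i].
  move=> i; have : pidon [set~ i] \in AM n by apply/inAM; apply: T_AMP; exact: T_pidon1.
  case/gen => s [hs e]; apply: (first_factor hS hs); by rewrite -e pidon_dom.
have sub : [set [set~ i] | i : 'I_n] \subset (@dom n) @: S'.
  apply/subsetP => X /imsetP [i _ ->]; have [g gS dg] := key i.
  by apply/imsetP; exists g.
have c1 : #|[set [set~ i] | i : 'I_n]| = n.
  rewrite card_imset ?card_ord // => i j e.
  move/setP: e => /(_ i); rewrite !in_setC1 eqxx /=.
  by case: eqVneq.
have [c2 _] := subset_leqif_cards sub.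
rewrite c1 in c2; apply: (leq_trans c2); exact: leq_imset_card.
Qed.

Lemma upper : #|gen_set n| <= n.
Proof.
rewrite /gen_set cardsU.
apply: (leq_trans (leq_subr _ _)).
rewrite cards2 cardsE.
have h := card_size [seq x n t | t <- iota 3 (n - 2)]; rewrite size_map size_iota in h.
apply: (@leq_trans (2 + (n - 2))); last by lia.
apply: leq_add; [by case: (_ != _) | exact: h].
Qed.

End Gen.

Theorem theorem5p7 (n : nat) (hn4 : n %% 4 = 2) (hn6 : 6 <= n) :
  generates (AM n) (gen_set n) /\ #|gen_set n| = n /\ is_rank (AM n) n.
Proof.
have gen : generates (AM n) (gen_set n).
  move=> f; split => [/inAM h|[s [hs e]]].
  - exact: (@AM_T n hn6 hn4 f h).
  - apply/inAM; apply: (@T_AMP n hn6 hn4); exists s; split => //.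
have card : #|gen_set n| = n.
  apply/eqP; rewrite eqn_leq (upper hn6 hn4) /=; exact: (lower hn6 hn4 gen).
split => //; split => //; split; first by exists (gen_set n).
move=> S' g; exact: (lower hn6 hn4 g).
Qed.
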